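(* Let $n\ge2$, $K\in\mathcal S_n$, and let $u\in S^{n-1}$ be such that $h_K$ is twice continuously differentiable in a neighborhood of $u$. Let $x=\nabla h_K(u)\in\partial K$ and $y=x-u\in\partial K^c$, and let $0\le r_1\le\dots\le r_{n-1}\le1$ and $0\le s_1\le\dots\le s_{n-1}\le1$ be the principal radii of curvature of $K$ at $x$ (in normal direction $u$) and of $K^c$ at $y$ (in normal direction $-u$), respectively. Then \[ r_i+s_{n-i}=1,\qquad i=1,\dots,n-1. \]
   Context: $B(x,r)$ is the closed Euclidean ball. For $A\subseteq\mathbb R^n$, $A^c=\bigcap_{x\in A}B(x,1)$. $\mathcal S_n$ is the class of all sets of the form $\bigcap_{x\in A}B(x,1)$, $A\subseteq\mathbb R^n$. $h_K(v)=\sup_{z\in K}\langle z,v\rangle$ is the support function. For a convex body $T$ whose support function is $C^2$ near a unit vector $w$, the principal radii of curvature of $T$ at $\nabla h_T(w)$ (with respect to the normal $w$) are the eigenvalues of the Hessian $\nabla^2h_T(w)$ restricted to $w^\perp$ (the eigenvalue in direction $w$ being $0$). *)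

(* Defs.v *)
From HB Require Import structures.
From mathcomp Require Import all_boot all_order all_algebra.
From mathcomp Require Import all_classical all_reals all_analysis.
Set Implicit Arguments. Unset Strict Implicit. Unset Printing Implicit Defensive.
Import Order.TTheory GRing.Theory Num.Theory.
Import numFieldNormedType.Exports.
Local Open Scope classical_set_scope.
Local Open Scope ring_scope.

Section Defs.
Variables (R : realType) (n : nat).
Notation V := 'rV[R]_n.

Definition dotp (x y : V) : R := \sum_(i < n) x 0 i * y 0 i.
Definition enorm (x : V) : R := Num.sqrt (dotp x x).

(* A^c = intersection of the closed Euclidean unit balls centred at points of A *)
Definition cpolar (A : set V) : set V := [set z | forall x, A x -> enorm (z - x) <= 1].

Definition in_Sn (K : set V) : Prop := exists A : set V, K = cpolar A.

(* support function, extended-real valued (+oo / -oo for unbounded / empty sets) *)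
Definition supp_fun (K : set V) (v : V) : \bar R :=
  ereal_sup [set (dotp z v)%:E | z in K].

Definition ebase (i : 'I_n) : V := delta_mx 0 i.

Definition partial (i : 'I_n) (f : V -> R) : V -> R := fun x => 'D_(ebase i) f x.

Definition grad (f : V -> R) (x : V) : V := \row_i partial i f x.
Definition hess (f : V -> R) (x : V) : 'M[R]_n :=
  \matrix_(i, j) partial j (partial i f) x.

Definition C2_near (f : V -> R) (w : V) : Prop :=
  \forall x \near w,
    [/\ f @ x --> f x,
        (forall i, derivable f x (ebase i)),
        (forall i, partial i f @ x --> partial i f x),
        (forall i j, derivable (partial i f) x (ebase j)) &
        (forall i j, partial j (partial i f) @ x --> partial j (partial i f) x)].

Definition supp_rep (T : set V) (w : V) (f : V -> R) : Prop :=
  \forall v \near w, supp_fun T v = (f v)%:E.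

Definition C2_support (T : set V) (w : V) : Prop :=
  exists f, supp_rep T w f /\ C2_near f w.

(* r : the eigenvalues (with multiplicity, nondecreasing) of the Hessian of h_T
   at the unit vector w, restricted to w^perp: B is an orthonormal basis of
   w^perp (as columns), B^T H B the matrix of the restriction. *)
Definition principal_radii (T : set V) (w : V) (r : 'I_n.-1 -> R) : Prop :=
  exists f, [/\ supp_rep T w f, C2_near f w,
    (forall i j : 'I_n.-1, (i <= j)%N -> r i <= r j) &
    exists B : 'M[R]_(n, n.-1),
      [/\ B^T *m B = 1%:M, w *m B = 0 &
          char_poly (B^T *m hess f w *m B) = \prod_(i < n.-1) ('X - (r i)%:P)]].

End Defs.

(* Main.v *)
Require Import Defs.
From HB Require Import structures.
From mathcomp Require Import all_boot all_order all_algebra.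
From mathcomp Require Import all_classical all_reals all_analysis.
From mathcomp Require Import ring lra.
Import Order.TTheory GRing.Theory Num.Theory.
Import numFieldNormedType.Exports.
Local Open Scope classical_set_scope.
Local Open Scope ring_scope.
Set Implicit Arguments. Unset Strict Implicit. Unset Printing Implicit Defensive.

Section Geo.
Variables (R : realType) (n : nat).
Notation V := 'rV[R]_n.
Implicit Types x y z w v : V.

Lemma dotpC x y : dotp x y = dotp y x.
Proof. by rewrite /dotp; apply: eq_bigr => i _; rewrite mulrC. Qed.

Lemma dotpDl x y z : dotp (x + y) z = dotp x z + dotp y z.
Proof. by rewrite /dotp -big_split; apply: eq_bigr => i _; rewrite !mxE mulrDl. Qed.

Lemma dotpZl (a : R) x y : dotp (a *: x) y = a * dotp x y.
Proof. by rewrite /dotp mulr_sumr; apply: eq_bigr => i _; rewrite !mxE mulrA. Qed.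

Lemma dotpNl x y : dotp (- x) y = - dotp x y.
Proof. by rewrite -scaleN1r dotpZl mulN1r. Qed.

Lemma dotpBl x y z : dotp (x - y) z = dotp x z - dotp y z.
Proof. by rewrite dotpDl dotpNl. Qed.

Lemma dotpDr x y z : dotp z (x + y) = dotp z x + dotp z y.
Proof. by rewrite dotpC dotpDl !(dotpC z). Qed.
Lemma dotpZr (a : R) x y : dotp y (a *: x) = a * dotp y x.
Proof. by rewrite dotpC dotpZl dotpC. Qed.
Lemma dotpNr x y : dotp y (- x) = - dotp y x.
Proof. by rewrite dotpC dotpNl dotpC. Qed.
Lemma dotpBr x y z : dotp z (x - y) = dotp z x - dotp z y.
Proof. by rewrite dotpDr dotpNr. Qed.

Lemma dotp_ge0 x : 0 <= dotp x x.
Proof. by rewrite /dotp; apply: sumr_ge0 => i _; rewrite -expr2 sqr_ge0. Qed.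

Lemma enorm_le1 x : (enorm x <= 1) = (dotp x x <= 1).
Proof. by rewrite /enorm -{1}sqrtr1 ler_sqrt // ?ler01. Qed.

Lemma enorm_sq x : enorm x ^+ 2 = dotp x x.
Proof. by rewrite /enorm sqr_sqrtr // dotp_ge0. Qed.

Lemma enorm_ge0 x : 0 <= enorm x.
Proof. exact: sqrtr_ge0. Qed.


Lemma spindle_scalar (pp pq qq pw qw lam mu D : R) :
  0 <= lam -> lam <= 1 -> 0 <= mu -> 0 <= D ->
  2 * mu + mu ^+ 2 = lam * (1 - lam) * D ->
  pp <= 1 -> qq <= 1 -> D = pp - 2 * pq + qq ->
  0 <= ((1-lam)^+2 * pp + 2 * (lam * (1 - lam)) * pq + lam^+2 * qq)
        - 2 * ((1-lam) * pw + lam * qw) + 1 ->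
  ((1-lam)^+2 * pp + 2 * (lam * (1 - lam)) * pq + lam^+2 * qq)
   + 2 * mu * ((1-lam) * pw + lam * qw) + mu ^+ 2 <= 1.
Proof.
move=> l0 l1 m0 D0 hm p1 q1 hD.
set R2 := ((1-lam)^+2 * pp + 2 * (lam * (1 - lam)) * pq + lam^+2 * qq).
set Rw := ((1-lam) * pw + lam * qw).
move=> h.
have eR2 : R2 = (1 - lam) * pp + lam * qq - lam * (1 - lam) * D.
  by rewrite /R2 hD; ring.
have hR2 : R2 <= 1 - lam * (1 - lam) * D.
  rewrite eR2 lerD2r.
  have : (1 - lam) * pp <= (1 - lam) by rewrite ler_piMr // subr_ge0.
  have : lam * qq <= lam by rewrite ler_piMr.
  lra.
have hRw : 2 * mu * Rw <= mu * (R2 + 1).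
  have := mulr_ge0 m0 h; rewrite /R2 /Rw; nra.
have hp : 0 <= lam * (1 - lam) * D.
  by rewrite mulr_ge0 // mulr_ge0 // subr_ge0.
have : mu * (R2 + 1) <= mu * (2 - lam * (1 - lam) * D).
  apply: ler_wpM2l => //; lra.
have : mu * (lam * (1 - lam) * D) >= 0 by rewrite mulr_ge0.
nra.
Qed.

Lemma support_ball (A : set V) x w :
  cpolar A x -> dotp w w = 1 ->
  (forall y, cpolar A y -> dotp y w <= dotp x w) ->
  cpolar (cpolar A) (x - w).
Proof.
move=> Kx ww xmax y Ky; rewrite enorm_le1 leNgt; apply/negP => H.
set d := y - x.
have eH : dotp (x - w - y) (x - w - y) = dotp d d + 2 * dotp d w + 1.
  have -> : x - w - y = - (d + w) by apply/rowP => i; rewrite !mxE; ring.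
  move: d => e.
  rewrite dotpNl dotpNr opprK !(dotpDl, dotpDr) ww (dotpC w e); ring.
set D := dotp d d in eH; set c := - dotp d w.
have c0 : 0 <= c.
  by rewrite /c /d dotpBl oppr_ge0 subr_le0 xmax.
have D0 : 0 <= D by exact: dotp_ge0.
have Dc : 2 * c < D by rewrite /c; lra.
set m := (2 * c + D) / 4.
have mc : c < m by rewrite /m; lra.
have m0 : 0 <= m by lra.
have mD : 2 * m < D by rewrite /m; lra.
have den0 : 0 < m ^+ 2 + D by have := sqr_ge0 m; lra.
set lam := (D - 2 * m) / (m ^+ 2 + D).
have lam0 : 0 < lam by rewrite divr_gt0 // subr_gt0.
have elam : lam * (m ^+ 2 + D) = D - 2 * m by rewrite /lam divfK // gt_eqF.
have lam1 : lam <= 1.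
  rewrite /lam ler_pdivrMr // mul1r; have := sqr_ge0 m; lra.
set mu := lam * m.
have mu0 : 0 <= mu by rewrite mulr_ge0 // ltW.
have hmu : 2 * mu + mu ^+ 2 = lam * (1 - lam) * D.
  have e2 : lam * (lam * (m ^+ 2 + D) - (D - 2 * m)) = 0 by rewrite elam subrr mulr0.
  rewrite /mu; clearbody lam; lra.
set q := x + lam *: d + mu *: w.
have Kq : cpolar A q.
  move=> a Aa; rewrite enorm_le1.
  have p1 : dotp (x - a) (x - a) <= 1 by rewrite -enorm_le1; exact: Kx.
  have q1 : dotp (y - a) (y - a) <= 1 by rewrite -enorm_le1; exact: Ky.
  set P := x - a in p1; set Q := y - a in q1.
  have -> : q - a = ((1 - lam) *: P + lam *: Q) + mu *: w.
    by apply/rowP => i; rewrite !mxE; ring.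
  have hD : D = dotp P P - 2 * dotp P Q + dotp Q Q.
    rewrite /D; have -> : d = Q - P by apply/rowP => i; rewrite !mxE; ring.
    clearbody P Q; rewrite !(dotpBl, dotpBr) (dotpC Q P); ring.
  clearbody P Q.
  set Rv := (1 - lam) *: P + lam *: Q.
  have eR2 : dotp Rv Rv = (1-lam)^+2 * dotp P P + 2*(lam*(1-lam))*dotp P Q + lam^+2*dotp Q Q.
    by rewrite /Rv !(dotpDl, dotpDr, dotpZl, dotpZr) (dotpC Q P); ring.
  have eRw : dotp Rv w = (1-lam)*dotp P w + lam*dotp Q w.
    by rewrite /Rv !(dotpDl, dotpZl).
  clearbody Rv.
  have h : 0 <= dotp Rv Rv - 2 * dotp Rv w + 1.
    have := dotp_ge0 (Rv - w); rewrite !(dotpBl, dotpBr) ww (dotpC w Rv); lra.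
  have -> : dotp (Rv + mu *: w) (Rv + mu *: w) = dotp Rv Rv + 2 * mu * dotp Rv w + mu^+2.
    by rewrite !(dotpDl, dotpDr, dotpZl, dotpZr) ww (dotpC w Rv); ring.
  rewrite eR2 eRw in h *.
  exact: (@spindle_scalar (dotp P P) (dotp P Q) (dotp Q Q) (dotp P w) (dotp Q w)
    lam mu D (ltW lam0) lam1 mu0 D0 hmu p1 q1 hD h).
have := xmax q Kq.
have ec : dotp d w = - c by rewrite /c opprK.
rewrite /q dotpDl dotpDl !dotpZl ww ec.
have : 0 < lam * (m - c) by rewrite mulr_gt0 // subr_gt0.
rewrite /mu; lra.
Qed.


Lemma sup_attained (S : set V) (phi : V -> R) x0 :
  S x0 -> (forall y, S y -> phi y <= phi x0) ->
  ereal_sup [set (phi z)%:E | z in S] = (phi x0)%:E.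
Proof.
move=> Sx0 hmax; apply/eqP; rewrite eq_le; apply/andP; split.
  by apply: ge_ereal_sup => _ [z Sz <-]; rewrite lee_fin; exact: hmax.
by apply: ereal_sup_ubound; exists x0.
Qed.

Lemma supp_identity (A : set V) x v :
  cpolar A x -> 0 < enorm v ->
  (forall y, cpolar A y -> dotp y (- v) <= dotp x (- v)) ->
  supp_fun (cpolar A) (- v) = (dotp x (- v))%:E /\
  supp_fun (cpolar (cpolar A)) v = (dotp x v + enorm v)%:E.
Proof.
move=> Kx N0 xmax; split.
  exact: (@sup_attained (cpolar A) (fun z => dotp z (- v)) x Kx xmax).
set N := enorm v.
have vv : dotp v v = N ^+ 2 by rewrite enorm_sq.
have tN : N^-1 * N = 1 by rewrite mulVf // gt_eqF.
set w := N^-1 *: (- v).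
have ww : dotp w w = 1.
  rewrite /w dotpZl dotpZr dotpNl dotpNr opprK vv.
  by rewrite mulrA -expr2 -exprMn tN expr1n.
have wmax : forall y, cpolar A y -> dotp y w <= dotp x w.
  move=> y Ky; rewrite /w !dotpZr ler_wpM2l ?xmax //.
  by rewrite invr_ge0 ltW.
have Kz := @support_ball A x w Kx ww wmax.
have -> : dotp x v + N = dotp (x - w) v.
  rewrite dotpBl /w dotpZl dotpNl vv; rewrite expr2 mulrN mulrA tN; ring.
apply: (@sup_attained (cpolar (cpolar A)) (fun z => dotp z v) (x - w) Kz).
move=> z Kz'.
have e1 : dotp (z - x) (z - x) <= 1 by rewrite -enorm_le1; exact: Kz'.
have h := dotp_ge0 (z - x - N^-1 *: v).
rewrite !(dotpBl, dotpBr, dotpZl, dotpZr) in h.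
have ez : dotp (x - w) v = dotp x v + N.
  rewrite dotpBl /w dotpZl dotpNl vv; rewrite expr2 mulrN mulrA tN; ring.
rewrite ez.
move: h e1; rewrite !(dotpBl, dotpBr) vv (dotpC v z) (dotpC v x) (dotpC x z).
set zv := dotp z v; set xv := dotp x v => h e1'.
have Np : 0 < N by [].
have hN : N^-1 * (N^-1 * N ^+ 2) = 1 by rewrite expr2 (mulrA N^-1 N N) tN mul1r tN.
have key : 2 * N^-1 * (zv - xv) <= 2.
  nra.
have : zv - xv <= N.
  have := ler_wpM2l (ltW Np) key.
  rewrite mulrA mulrCA -mulrA mulrA (mulrC N) tN; lra.
lra.
Qed.

End Geo.

Section Calc.
Variables (R : realType) (n : nat).
Notation V := 'rV[R]_n.
Implicit Types (z e : V) (F : V -> R) (d dF dpsi : R).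

Lemma line_derive F z e : 'D_e F z = 'D_1 (fun h : R => F (h *: e + z)) 0.
Proof.
rewrite /derive; set g1 := fun h => _; set g2 := fun h => _.
suff -> : g1 = g2 by [].
by rewrite funeqE /g1 /g2 => h /=; rewrite addr0 scale0r add0r [_%:A]mulr1.
Qed.

Lemma is_derive_line F z e d :
  is_derive (0:R) (1:R) (fun h : R => F (h *: e + z)) d -> is_derive z e F d.
Proof.
move=> [h1 h2]; split; first exact: (proj2 (derivable1P F z e) h1).
by rewrite line_derive.
Qed.

Lemma is_derive_lineP F z e d :
  is_derive z e F d -> is_derive (0:R) (1:R) (fun h : R => F (h *: e + z)) d.
Proof.
move=> [h1 h2]; split; first exact: (proj1 (derivable1P F z e) h1).
by rewrite -line_derive.
Qed.

Lemma is_derive_compR F (psi : R -> R) z e dF dpsi :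
  is_derive z e F dF -> is_derive (F z) 1 psi dpsi ->
  is_derive z e (psi \o F) (dpsi * dF).
Proof.
move=> /is_derive_lineP hF hpsi; apply: is_derive_line.
have e0 : (fun h : R => F (h *: e + z)) 0 = F z by rewrite /= scale0r add0r.
rewrite -e0 in hpsi.
exact: (@is_derive1_comp R psi (fun h : R => F (h *: e + z)) 0 dpsi dF hpsi hF).
Qed.

Lemma is_derive_negpre F z e d :
  is_derive (- z) e F d -> is_derive z e (fun w => F (- w)) (- d).
Proof.
move=> /is_derive_lineP hF; apply: is_derive_line.
have -> : (fun h : R => F (- (h *: e + z))) =
          (fun h : R => F (h *: e + - z)) \o (fun h : R => - h).
  by rewrite funeqE => h /=; rewrite opprD scaleNr.
rewrite -mulrN1.
apply: is_derive1_comp => /=.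
by rewrite oppr0.
Qed.

Lemma is_derive_quad (a b c : R) :
  is_derive (0:R) (1:R) (fun h : R => h ^+ 2 * a + h * b + c) b.
Proof.
apply: is_derive_eq.
by rewrite !(scaler0, scale0r, addr0, add0r) [_%:A]mulr1.
Qed.


Lemma is_derive_coord z e (i : 'I_n) : is_derive z e (fun w : V => w 0 i) (e 0 i).
Proof.
apply: is_derive_line.
have -> : (fun h : R => (h *: e + z) 0 i) = (fun h : R => h ^+ 2 * 0 + h * e 0 i + z 0 i).
  by rewrite funeqE => h; rewrite !mxE mulr0 add0r.
exact: is_derive_quad.
Qed.

Lemma is_derive_sq z e : is_derive z e (fun w : V => dotp w w) (2 * dotp z e).
Proof.
apply: is_derive_line.
have -> : (fun h : R => dotp (h *: e + z) (h *: e + z)) =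
   (fun h : R => h ^+ 2 * dotp e e + h * (2 * dotp z e) + dotp z z).
  rewrite funeqE => h; rewrite !(dotpDl, dotpDr, dotpZl, dotpZr) (dotpC e z).
  by rewrite expr2; ring.
exact: is_derive_quad.
Qed.


Lemma near_near (a : V) (P : V -> Prop) :
  (\forall x \near a, P x) -> \forall x \near a, \forall y \near x, P y.
Proof. by move=> /nbhs_interior. Qed.

Lemma near_neg (a : V) (P : V -> Prop) :
  (\forall x \near a, P x) -> \forall x \near - a, P (- x).
Proof.
move=> Pa.
have : (fun x : V => - x) @ (- a) --> a.
  by rewrite -{2}(opprK a); apply: opp_continuous.
by move=> /(_ _ Pa).
Qed.


Lemma continuous_at_near (F G : V -> R) (x : V) :
  (\forall y \near x, F y = G y) -> G @ x --> G x -> F @ x --> F x.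
Proof.
move=> FG cG; rewrite (nbhs_singleton FG).
apply: (cvg_trans _ cG); apply: (@near_eq_cvg _ _ (nbhs x) _ G F); by move: FG; apply: filterS => y ->.
Qed.

Lemma sq_differentiable z : differentiable (fun w : V => dotp w w) z.
Proof.
have -> : (fun w : V => dotp w w) = \sum_(i < n) (fun w : V => w 0 i * w 0 i).
  by rewrite fct_sumE.
apply: differentiable_sum => i.
by apply: differentiableM; apply: differentiable_coord.
Qed.

Lemma sq_continuous : continuous (fun w : V => dotp w w).
Proof. by move=> z; apply: differentiable_continuous; exact: sq_differentiable. Qed.

Lemma enorm_continuous : continuous (@enorm R n).
Proof.
move=> z; apply: (@continuous_comp _ _ _ (fun w : V => dotp w w) Num.sqrt).
  exact: sq_continuous.
exact: sqrt_continuous.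
Qed.


Lemma is_derive_enorm z e : 0 < enorm z ->
  is_derive z e (@enorm R n) (dotp z e / enorm z).
Proof.
move=> N0.
have sq0 : 0 < dotp z z by rewrite -enorm_sq exprn_gt0.
have H := is_derive_compR (is_derive_sq z e) (is_derive1_sqrt sq0).
apply: is_derive_eq H _.
rewrite /enorm; field.
by rewrite gt_eqF.
Qed.

Lemma is_deriveVV (F : V -> R) z e d : F z != 0 -> is_derive z e F d ->
  is_derive z e (fun y => (F y)^-1) (- (F z) ^- 2 * d).
Proof.
move=> Fz [dF vF]; split; first exact: derivableV.
by rewrite deriveV // vF.
Qed.

Lemma dotp_ebase w (i : 'I_n) : dotp w (ebase R i) = w 0 i.
Proof.
rewrite /dotp (bigD1 i) //= big1 ?addr0; first by rewrite /ebase mxE !eqxx mulr1.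
by move=> j ji; rewrite /ebase mxE (negbTE ji) andbF mulr0.
Qed.

Definition gfun (f : V -> R) : V -> R := fun w => enorm w - f (- w).

Lemma is_derive_g f v (i : 'I_n) : 0 < enorm v -> derivable f (- v) (ebase R i) ->
  is_derive v (ebase R i) (gfun f) (v 0 i / enorm v + partial i f (- v)).
Proof.
move=> N0 df.
have h1 := is_derive_enorm (ebase R i) N0.
have h2 := is_derive_negpre (DeriveDef df (erefl ('D_(ebase R i) f (- v)))).
have := is_deriveB h1 h2.
rewrite dotp_ebase opprK => H; exact: H.
Qed.


Definition Pfun (f : V -> R) (i : 'I_n) : V -> R :=
  fun w => w 0 i / enorm w + partial i f (- w).

Definition Qval (f : V -> R) (i j : 'I_n) (v : V) : R :=
  v 0 i * (- (enorm v) ^- 2 * (v 0 j / enorm v)) + (enorm v)^-1 * (i == j)%:R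
  - partial j (partial i f) (- v).

Lemma is_derive_P f v (i j : 'I_n) : 0 < enorm v ->
  derivable (partial i f) (- v) (ebase R j) ->
  is_derive v (ebase R j) (Pfun f i) (Qval f i j v).
Proof.
move=> N0 df.
have h1 := is_derive_coord v (ebase R j) i.
have N0' : enorm v != 0 by rewrite gt_eqF.
have h2 := @is_deriveVV (@enorm R n) v (ebase R j) _ N0' (is_derive_enorm (ebase R j) N0).
have h3 := is_deriveM h1 h2.
have h4 := is_derive_negpre (DeriveDef df (erefl ('D_(ebase R j) (partial i f) (- v)))).
have := is_deriveD h3 h4.
rewrite dotp_ebase /Qval /ebase mxE eqxx /= => H.
apply: is_derive_eq H _.

by [].
Qed.


Lemma cvg_negpre (G : V -> R) (v : V) : G @ (- v) --> G (- v) ->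
  (fun w => G (- w)) @ v --> G (- v).
Proof.
move=> cG; apply: (cvg_comp (fun w : V => - w) G) cG.
exact: opp_continuous.
Qed.

Lemma cvg_coord (v : V) (i : 'I_n) : (fun w : V => w 0 i) @ v --> v 0 i.
Proof. exact: coord_continuous. Qed.

Lemma cvg_enorm (v : V) : (@enorm R n) @ v --> enorm v.
Proof. exact: enorm_continuous. Qed.

Lemma cvg_enormV (v : V) : 0 < enorm v ->
  (fun w : V => (enorm w)^-1) @ v --> (enorm v)^-1.
Proof. by move=> N0; apply: (@cvgV _ _ (nbhs v) _); [rewrite gt_eqF | exact: cvg_enorm]. Qed.

Lemma cont_g (f : V -> R) (v : V) : f @ (- v) --> f (- v) -> gfun f @ v --> gfun f v.
Proof.
move=> cf; apply: (@cvgB _ _ _ (nbhs v) _); first exact: cvg_enorm.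
exact: cvg_negpre.
Qed.

Lemma cont_P (f : V -> R) (i : 'I_n) (v : V) : 0 < enorm v ->
  partial i f @ (- v) --> partial i f (- v) -> Pfun f i @ v --> Pfun f i v.
Proof.
move=> N0 cf; apply: (@cvgD _ _ _ (nbhs v) _); last exact: cvg_negpre.
by apply: (@cvgM _ _ (nbhs v) _); [exact: cvg_coord | exact: cvg_enormV].
Qed.

Lemma cont_Q (f : V -> R) (i j : 'I_n) (v : V) : 0 < enorm v ->
  partial j (partial i f) @ (- v) --> partial j (partial i f) (- v) ->
  Qval f i j @ v --> Qval f i j v.
Proof.
move=> N0 cf; apply: (@cvgB _ _ _ (nbhs v) _); last exact: cvg_negpre.
apply: (@cvgD _ _ _ (nbhs v) _); last by apply: (@cvgM _ _ (nbhs v) _); [exact: cvg_enormV | exact: cvg_cst].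
apply: (@cvgM _ _ (nbhs v) _); first exact: cvg_coord.
apply: (@cvgM _ _ (nbhs v) _).
  apply: (@cvgN _ _ _ (nbhs v) _); apply: (@cvgV _ _ (nbhs v) _); first by rewrite expf_neq0 // gt_eqF.
  by apply: (@cvgM _ _ (nbhs v) _); exact: cvg_enorm.
by apply: (@cvgM _ _ (nbhs v) _); [exact: cvg_coord | exact: cvg_enormV].
Qed.


Lemma norm_le1 (e : V) : dotp e e <= 1 -> `|e| <= 1.
Proof.
move=> ee; rewrite [leLHS]/Num.norm /= mx_normrE.
apply: bigmax_le => // -[i j] _ /=.
have -> : i = 0 by apply/val_inj => /=; case: i => -[].
have h : e 0 j * e 0 j <= 1.
  apply: le_trans ee; rewrite /dotp (bigD1 j) //= lerDl.
  by apply: sumr_ge0 => k _; rewrite -expr2 sqr_ge0.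
have h2 : `|e 0 j| ^+ 2 <= 1 by rewrite real_normK ?num_real // expr2.
have := normr_ge0 (e 0 j); nra.
Qed.

Lemma cpolar_closed (A : set V) : closed (cpolar A).
Proof.
have -> : cpolar A = \bigcap_(a in A) ((fun z => enorm (z - a)) @^-1` [set r | r <= 1]).
  by apply/seteqP; split => z /= Hz a Aa; exact: Hz.
apply: closed_bigI => a _; apply: preimage_closed; last exact: closed_le.
move=> z _; apply: (@continuous_comp _ _ _ (fun z : V => z - a) (@enorm R n)).
  by apply: (@cvgB _ _ _ (nbhs z) _); [exact: cvg_id | exact: cvg_cst].
exact: enorm_continuous.
Qed.

Lemma cpolar_bounded (A : set V) a : A a -> bounded_set (cpolar A).
Proof.
move=> Aa; rewrite /bounded_near.
have H : \forall M \near +oo, `|a| + 1 <= M by apply: nbhs_pinfty_ge; exact: num_real.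
apply: filterS H => M HM z Kz.
have h1 : `|z - a| <= 1 by apply: norm_le1; rewrite -enorm_le1; exact: Kz.
have h2 : `|z| <= `|z - a| + `|a| by rewrite -{1}(subrK a z) ler_normD.
apply: (le_trans h2); apply: le_trans (lerD h1 (lexx _)) _.
by rewrite addrC.
Qed.

Lemma exists_max (A : set V) (w : V) : (exists a, A a) -> (exists x, cpolar A x) ->
  exists x, cpolar A x /\ forall y, cpolar A y -> dotp y w <= dotp x w.
Proof.
move=> [a Aa] [x0 Kx0].
have cK : compact (cpolar A).
  apply: bounded_closed_compact; [exact: cpolar_bounded Aa | exact: cpolar_closed].
have [||c cK' cmax] := @EVT_max_rV R n (fun y => dotp y w) (cpolar A) _ cK.
- by exists x0.
- apply: continuous_subspaceT => z.
  apply: differentiable_continuous.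
  have -> : (fun y : V => dotp y w) = \sum_(i < n) (fun y : V => y 0 i * w 0 i).
    by rewrite fct_sumE.
  apply: differentiable_sum => i.
  by apply: differentiableM; [apply: differentiable_coord | apply: differentiable_cst].
- exists c; split; first by move: cK'; rewrite inE.
  by move=> y Ky; apply: cmax; rewrite inE.
Qed.

End Calc.

Section LA.
Variable (R : realType).

Lemma prod_enum k (s : 'I_k -> R) :
  \prod_(i < k) ('X - (s i)%:P) = \prod_(x <- [seq s i | i <- Order.enum 'I_k]) ('X - x%:P).
Proof. by rewrite big_map Order.enum_ord big_enum. Qed.

Lemma sorted_fun k (s : 'I_k -> R) :
  (forall i j : 'I_k, (i <= j)%N -> s i <= s j) ->
  sorted <=%O [seq s i | i <- Order.enum 'I_k].
Proof.
move=> hs.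
have H : sorted (relpre val leq) (enum 'I_k) by rewrite -sorted_map val_enum_ord iota_sorted.
rewrite Order.enum_ord; move: H; apply: homo_sorted => i j /=; exact: hs.
Qed.

Lemma radii_match k (r s : 'I_k -> R) :
  (forall i j : 'I_k, (i <= j)%N -> r i <= r j) ->
  (forall i j : 'I_k, (i <= j)%N -> s i <= s j) ->
  \prod_(i < k) ('X - (s i)%:P) = \prod_(i < k) ('X - (1 - r i)%:P) ->
  forall i, r i + s (rev_ord i) = 1.
Proof.
move=> hr hs E.
rewrite [RHS](reindex_inj rev_ord_inj) /= in E.
have E' := E; rewrite (prod_enum s) (prod_enum (fun i => 1 - r (rev_ord i))) in E'.
have P := prod_XsubC_eq E'.
have S1 := sorted_fun hs.
have S2 : sorted <=%O [seq 1 - r (rev_ord i) | i <- Order.enum 'I_k].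
  apply: sorted_fun => i j ij; rewrite lerD2l lerN2; apply: hr.
  by rewrite /= leq_sub2l // ltn_add2r.
have Eq := le_sorted_eq S1 S2 P.
move=> i.
have := congr1 (fun t => nth 0 t (rev_ord i)) Eq.
rewrite !(nth_map (rev_ord i)) ?Order.size_enum_ord ?ltn_ord //.
rewrite !Order.nth_ord_enum rev_ordK => ->; ring.
Qed.


Lemma char_poly_conj k (C Q : 'M[R]_k) : Q^T *m Q = 1%:M ->
  char_poly (Q^T *m C *m Q) = char_poly C.
Proof.
move=> QQ.
have e : char_poly_mx (Q^T *m C *m Q) =
    map_mx polyC Q^T *m char_poly_mx C *m map_mx polyC Q.
  rewrite /char_poly_mx mulmxBr mulmxBl -!map_mxM.
  have PP : map_mx (@polyC R) Q^T *m map_mx (@polyC R) Q = 1%:M.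
    by rewrite -map_mxM QQ map_mx1.
  by rewrite [_ *m 'X%:M]scalar_mxC -(mulmxA 'X%:M) PP mulmx1.
rewrite /char_poly e !det_mulmx mulrAC -det_mulmx -map_mxM QQ map_mx1 det1 mul1r.
by [].
Qed.

Lemma char_poly_1B k (C : 'M[R]_k) (r : 'I_k -> R) :
  char_poly C = \prod_(i < k) ('X - (r i)%:P) ->
  char_poly (1%:M - C) = \prod_(i < k) ('X - (1 - r i)%:P).
Proof.
move=> E.
pose q : {poly R} := 1 - 'X.
have H1 : map_mx (comp_poly q) (char_poly_mx C) = (-1) *: char_poly_mx (1%:M - C).
  apply/matrixP => i j; rewrite !mxE /=.
  rewrite rmorphB /= rmorphMn /= comp_polyX comp_polyC.
  case: (i == j); rewrite /= ?mulr1n ?mulr0n ?polyCB ?polyC1 ?polyC0; rewrite /q; ring.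
have H2 : comp_poly q (char_poly C) = (-1) ^+ k * char_poly (1%:M - C).
  by rewrite /char_poly -det_map_mx H1 detZ.
have H3 : comp_poly q (\prod_(i < k) ('X - (r i)%:P)) =
    (-1) ^+ k * \prod_(i < k) ('X - (1 - r i)%:P).
  rewrite rmorph_prod.
  have -> : (-1) ^+ k = \prod_(i < k) (-1 : {poly R}) by rewrite prodr_const card_ord.
  rewrite -big_split /=; apply: eq_bigr => i _.
  rewrite rmorphB /= comp_polyX comp_polyC /q polyCB polyC1; ring.
have := H2; rewrite E H3 => /(congr1 ( *%R ((-1) ^+ k))).
by rewrite !signrMK => ->.
Qed.


Lemma final_LA m (u : 'rV[R]_(m.+2)) (H H' : 'M[R]_(m.+2))
    (B1 B2 : 'M[R]_(m.+2, m.+1)) (r s : 'I_m.+1 -> R) :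
  u *m u^T = 1%:M ->
  H' = 1%:M - u^T *m u - H ->
  B1^T *m B1 = 1%:M -> u *m B1 = 0 ->
  char_poly (B1^T *m H *m B1) = \prod_(i < m.+1) ('X - (r i)%:P) ->
  B2^T *m B2 = 1%:M -> (- u) *m B2 = 0 ->
  char_poly (B2^T *m H' *m B2) = \prod_(i < m.+1) ('X - (s i)%:P) ->
  (forall i j : 'I_m.+1, (i <= j)%N -> r i <= r j) ->
  (forall i j : 'I_m.+1, (i <= j)%N -> s i <= s j) ->
  forall i, r i + s (rev_ord i) = 1.
Proof.
move=> uu eH' B1B1 uB1 cr B2B2 uB2 cs hr hs.
have uB2' : u *m B2 = 0 by move: uB2; rewrite mulNmx => /eqP; rewrite oppr_eq0 => /eqP.
have P1 : B1 *m B1^T = 1%:M - u^T *m u.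
  have MM : col_mx u B1^T *m (col_mx u B1^T)^T = 1%:M.
    rewrite tr_col_mx mul_col_row trmxK uB1 -trmx_mul uB1 trmx0 B1B1 uu.
    by rewrite -scalar_mx_block.
  have := @mulmx1C R (m.+2) (col_mx u B1^T) (col_mx u B1^T)^T MM.
  rewrite tr_col_mx => e.
  have e3 : @mulmx R (m.+2) (1 + m.+1) (m.+2) (row_mx u^T B1^T^T) (col_mx u B1^T) = 1%:M := e.
  move: e3; rewrite mul_row_col trmxK => {}e.
  by rewrite -e addrC addKr.
have BQ : B1 *m (B1^T *m B2) = B2.
  by rewrite mulmxA P1 mulmxBl mul1mx -mulmxA uB2' mulmx0 subr0.
set Q := B1^T *m B2 in BQ.
have QQ : Q^T *m Q = 1%:M.
  by rewrite {1}/Q trmx_mul trmxK -mulmxA BQ B2B2.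
set C := B1^T *m H *m B1 in cr.
have e2 : B2^T *m H' *m B2 = Q^T *m (1%:M - C) *m Q.
  rewrite eH' !mulmxBr !mulmxBl mulmx1 B2B2.
  have z : B2^T *m (u^T *m u) *m B2 = 0 by rewrite -!mulmxA uB2' !mulmx0.
  rewrite z subr0 mulmx1 QQ; congr (_ - _).
  by rewrite -BQ trmx_mul /C !mulmxA.
have := char_poly_1B cr.
rewrite -(char_poly_conj (1%:M - C) QQ) -e2 cs.
exact: radii_match hr hs.
Qed.

End LA.

Section Main.
Variables (R : realType) (n : nat).
Notation V := 'rV[R]_n.

Definition C2pt (f : V -> R) (x : V) : Prop :=
  [/\ f @ x --> f x,
      (forall i, derivable f x (ebase R i)),
      (forall i, partial i f @ x --> partial i f x),
      (forall i j, derivable (partial i f) x (ebase R j)) &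
      (forall i j, partial j (partial i f) @ x --> partial j (partial i f) x)].

Definition good (f : V -> R) (v : V) : Prop := 0 < enorm v /\ C2pt f (- v).

Lemma pg_eq (f : V -> R) (v : V) (i : 'I_n) : (\forall y \near v, good f y) ->
  \forall y \near v, partial i (gfun f) y = Pfun f i y.
Proof.
apply: filterS => y [Ny [_ d1 _ _ _]].
have [_ H] := is_derive_g Ny (d1 i).
exact: H.
Qed.

Lemma ppg_eq (f : V -> R) (v : V) (i j : 'I_n) : (\forall y \near v, good f y) ->
  \forall y \near v, partial j (partial i (gfun f)) y = Qval f i j y.
Proof.
move=> Hv; apply: filterS (near_near Hv) => y Hy.
have [Ny [_ _ _ d2 _]] := nbhs_singleton Hy.
change ('D_(ebase R j) (partial i (gfun f)) y = Qval f i j y).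
rewrite (@near_eq_derive _ _ _ (partial i (gfun f)) (Pfun f i) y (ebase R j) (pg_eq i Hy)).
by have [_ H] := is_derive_P Ny (d2 i j); exact: H.
Qed.

Lemma C2_g (f : V -> R) (u : V) : (\forall v \near - u, good f v) ->
  C2_near (gfun f) (- u).
Proof.
move=> Hg; rewrite /C2_near; apply: filterS (near_near Hg) => v Hv.
have [Nv [c0 d1 c1 d2 c2]] := nbhs_singleton Hv.
split.
- exact: cont_g c0.
- by move=> i; have [] := is_derive_g Nv (d1 i).
- move=> i; apply: continuous_at_near (pg_eq i Hv) _; exact: cont_P Nv (c1 i).
- move=> i j; apply: (@near_eq_derivable _ _ _ (Pfun f i)).
    by apply: filterS (pg_eq i Hv) => y ->.
  by have [] := is_derive_P Nv (d2 i j).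
- move=> i j; apply: continuous_at_near (ppg_eq i j Hv) _; exact: cont_Q Nv (c2 i j).
Qed.


Lemma enormN (v : V) : enorm (- v) = enorm v.
Proof. by rewrite /enorm dotpNl dotpNr opprK. Qed.

Lemma dotp_unit (u : V) : enorm u = 1 -> dotp u u = 1.
Proof. by move=> h; rewrite -enorm_sq h expr1n. Qed.

Lemma A_nonempty (A : set V) (u : V) (f : V -> R) :
  enorm u = 1 -> supp_fun (cpolar A) u = (f u)%:E -> exists a, A a.
Proof.
move=> hu Hu; apply: contrapT => nA.
have Kz : cpolar A ((f u + 1) *: u).
  by move=> a Aa; exfalso; apply: nA; exists a.
have : ((dotp ((f u + 1) *: u) u)%:E <= supp_fun (cpolar A) u)%E.
  by apply: ereal_sup_ubound; exists ((f u + 1) *: u).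
rewrite Hu lee_fin dotpZl dotp_unit // mulr1; lra.
Qed.

Lemma K_nonempty (K : set V) (u : V) (f : V -> R) :
  supp_fun K u = (f u)%:E -> exists x, K x.
Proof.
move=> Hu; apply: contrapT => nK.
have : (supp_fun K u <= -oo)%E.
  by apply: ge_ereal_sup => y [z Kz _]; exfalso; apply: nK; exists z.
by rewrite Hu.
Qed.

Lemma good_near (K : set V) (u : V) (f : V -> R) :
  enorm u = 1 -> supp_rep K u f -> C2_near f u ->
  \forall v \near - u, [/\ 0 < enorm v, supp_fun K (- v) = (f (- v))%:E & C2pt f (- v)].
Proof.
move=> hu Sf Cf.
have Np : \forall v \near - u, 0 < enorm v.
  have c := @enorm_continuous R n (- u).
  have := @cvgr_gt R V (nbhs (- u)) _ (@enorm R n) (enorm (- u)) c 0.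
  by rewrite enormN hu ltr01 => /(_ _ erefl).
have S' := near_neg Sf.
have C' := near_neg Cf.
have SC : \forall v \near - u, supp_fun K (- v) = (f (- v))%:E /\ C2pt f (- v).
  by apply: filterS2 S' C' => v h1 h2; split.
by apply: filterS2 Np SC => v h1 [h2 h3]; split.
Qed.

Lemma part1_supp (A : set V) (u : V) (f : V -> R) :
  enorm u = 1 -> supp_rep (cpolar A) u f -> C2_near f u ->
  supp_rep (cpolar (cpolar A)) (- u) (gfun f).
Proof.
move=> hu Sf Cf.
have [a Aa] := A_nonempty hu (nbhs_singleton Sf).
have [x0 Kx0] := K_nonempty (nbhs_singleton Sf).
apply: filterS (good_near hu Sf Cf) => v [Nv Sv _].
have [x [Kx xmax]] := exists_max (- v) (ex_intro _ a Aa) (ex_intro _ x0 Kx0).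
have [h1 h2] := supp_identity Kx Nv xmax.
rewrite h2 /gfun; congr (_%:E).
move: Sv; rewrite h1 => -[<-]; rewrite dotpNr; ring.
Qed.


Lemma good_g (K : set V) (u : V) (f : V -> R) :
  enorm u = 1 -> supp_rep K u f -> C2_near f u -> \forall v \near - u, good f v.
Proof.
move=> hu Sf Cf; apply: filterS (good_near hu Sf Cf) => v [h1 _ h3].
by split.
Qed.

Lemma grad_g (f : V -> R) (u : V) : enorm u = 1 ->
  (\forall v \near - u, good f v) -> grad (gfun f) (- u) = grad f u - u.
Proof.
move=> hu Hg; apply/rowP => i; rewrite !mxE.
rewrite (nbhs_singleton (pg_eq i Hg)) /Pfun enormN hu invr1 mulr1 opprK mxE.
by rewrite addrC.
Qed.

Lemma hess_g (f : V -> R) (u : V) : enorm u = 1 ->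
  (\forall v \near - u, good f v) ->
  hess (gfun f) (- u) = 1%:M - u^T *m u - hess f u.
Proof.
move=> hu Hg; apply/matrixP => i j; rewrite !mxE.
rewrite (nbhs_singleton (ppg_eq i j Hg)) /Qval enormN hu opprK.
rewrite big_ord1 !mxE expr1n invr1 !mulr1 eq_sym.
rewrite /partial; ring.
Qed.

Lemma partial_near (f1 f2 : V -> R) (w : V) (i : 'I_n) :
  (\forall y \near w, f1 y = f2 y) -> \forall y \near w, partial i f1 y = partial i f2 y.
Proof.
move=> H; apply: filterS (near_near H) => y Hy.
exact: near_eq_derive.
Qed.

Lemma hess_near (f1 f2 : V -> R) (w : V) :
  (\forall y \near w, f1 y = f2 y) -> hess f1 w = hess f2 w.
Proof.
move=> H; apply/matrixP => i j; rewrite !mxE.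
exact: (near_eq_derive _ (partial_near i H)).
Qed.

Lemma supp_rep_eq (T : set V) (w : V) (f1 f2 : V -> R) :
  supp_rep T w f1 -> supp_rep T w f2 -> \forall y \near w, f1 y = f2 y.
Proof.
move=> H1 H2; apply: filterS2 H1 H2 => y h1 h2.
by move: h2; rewrite h1 => -[].
Qed.

End Main.


Lemma final_n (R : realType) n (u : 'rV[R]_n) (H H' : 'M[R]_n)
    (B1 B2 : 'M[R]_(n, n.-1)) (r s : 'I_n.-1 -> R) : (2 <= n)%N ->
  u *m u^T = 1%:M ->
  H' = 1%:M - u^T *m u - H ->
  B1^T *m B1 = 1%:M -> u *m B1 = 0 ->
  char_poly (B1^T *m H *m B1) = \prod_(i < n.-1) ('X - (r i)%:P) ->
  B2^T *m B2 = 1%:M -> (- u) *m B2 = 0 ->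
  char_poly (B2^T *m H' *m B2) = \prod_(i < n.-1) ('X - (s i)%:P) ->
  (forall i j : 'I_n.-1, (i <= j)%N -> r i <= r j) ->
  (forall i j : 'I_n.-1, (i <= j)%N -> s i <= s j) ->
  forall i, r i + s (rev_ord i) = 1.
Proof.
case: n u H H' B1 B2 r s => [|[|m]] // u H H' B1 B2 r s _.
exact: final_LA.
Qed.

Lemma uuT (R : realType) n (u : 'rV[R]_n) : enorm u = 1 -> u *m u^T = 1%:M.
Proof.
move=> hu; apply/matrixP => i j; rewrite !ord1 !mxE /=.
rewrite -(dotp_unit hu) /dotp; apply: eq_bigr => k _; rewrite mxE.
by [].
Qed.

Unset Implicit Arguments.
Theorem theorem4p27 (R : realType) (n : nat) (K : set 'rV[R]_n) (u : 'rV[R]_n)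
    (f : 'rV[R]_n -> R) :
  (2 <= n)%N -> in_Sn K -> enorm u = 1 ->
  supp_rep K u f -> C2_near f u ->
  (exists g : 'rV[R]_n -> R,
      [/\ supp_rep (cpolar K) (- u) g, C2_near g (- u) &
          grad g (- u) = grad f u - u]) /\
  (forall r s : 'I_n.-1 -> R,
      principal_radii K u r -> principal_radii (cpolar K) (- u) s ->
      forall i : 'I_n.-1, r i + s (rev_ord i) = 1).
Proof.
move=> n2 [A ->] hu Sf Cf.
have Hg := good_g hu Sf Cf.
have Sg := part1_supp hu Sf Cf.
split.
  exists (gfun f); split; [exact: Sg | exact: C2_g Hg | exact: grad_g hu Hg].
move=> r s [f1 [S1 C1 hr [B1 [B1B1 uB1 cr]]]] [f2 [S2 C2 hs [B2 [B2B2 uB2 cs]]]].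
have h1 : hess f1 u = hess f u := hess_near (supp_rep_eq S1 Sf).
have h2 : hess f2 (- u) = 1%:M - u^T *m u - hess f u.
  by rewrite (hess_near (supp_rep_eq S2 Sg)) (hess_g hu Hg).
rewrite h1 in cr.
exact: (final_n n2 (uuT hu) h2 B1B1 uB1 cr B2B2 uB2 cs hr hs).
Qed.
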